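(* Let $V$ be a finite set of variables and let $(\mathit{base}_0, \mathit{stay}_0, \mathit{step}_0, \mathit{conc}_0)$ and $(\mathit{base}_1, \mathit{stay}_1, \mathit{step}_1, \mathit{conc}_1)$ be generalized acceleration lemmas (GALs) over $V$. Let $\mathit{step} := (\mathit{conc}_0 \land \mathit{step}_0 ) \lor (\mathit{conc}_1 \land \mathit{step}_1 \land \mathit{stay}_0)$. Then the tuple $(\mathit{base}_0 \lor \mathit{base}_1,\ \mathit{stay}_0 \land \mathit{stay}_1,\ \mathit{step},\ \mathit{conc}_0 \lor \mathit{conc}_1)$ is also a GAL over $V$.
   Context: Fix a first-order theory $T$. For a set of variables $X$, $\mathcal{A}(X)$ denotes the set of assignments $\nu: X \to \mathcal{V}$ (values). $X' = \{x' \mid x \in X\}$ is a disjoint primed copy of $X$; for $\nu \in \mathcal{A}(X)$, $\nu' \in \mathcal{A}(X')$ is given by $\nu'(x') = \nu(x)$; for $\nu_1,\nu_2 \in \mathcal{A}(X)$, $\langle \nu_1,\nu_2\rangle := \nu_1 \uplus \nu_2'$. $\nu \models_T \alpha$ denotes entailment in $T$. A generalized acceleration lemma (GAL) over $V$ is a tuple $(\mathit{base}, \mathit{stay}, \mathit{step}, \mathit{conc})$ of first-order formulas with $\mathit{base}, \mathit{conc}$ having free variables in $V$ and $\mathit{stay}, \mathit{step}$ having free variables in $V \cup V'$, such that: (I) for every sequence $\alpha \in \mathcal{A}(V)^\omega$ with $\alpha[0] \models_T \mathit{conc}$, if (a) for all $i$, $\langle\alpha[i],\alpha[i+1]\rangle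 \models_T \mathit{step} \lor \mathit{stay}$, and (b) for all $i$ there is $j \ge i$ with $\langle\alpha[j],\alpha[j+1]\rangle \models_T \mathit{step}$, then there is $k$ with $\alpha[k] \models_T \mathit{base}$; and (II) for all $\nu,\nu' \in \mathcal{A}(V)$ with $\nu \models_T \mathit{conc}$ and $\langle \nu,\nu'\rangle \models_T \mathit{step}\lor\mathit{stay}$, we have $\nu' \models_T \mathit{conc}$. *)

(* Defs.v *)
(* A formula with free variables in V is represented by its set of models
   (assignments V -> Val satisfying it modulo T); a formula over V ∪ V' by a
   relation on pairs of assignments <nu1, nu2>. *)
From Stdlib Require Import List Arith.

Definition assignment (V Val : Type) := V -> Val.

Definition fml (V Val : Type) := assignment V Val -> Prop.
Definition fml2 (V Val : Type) := assignment V Val -> assignment V Val -> Prop.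

Definition f_or {V Val} (a b : fml V Val) : fml V Val := fun nu => a nu \/ b nu.
Definition f2_and {V Val} (a b : fml2 V Val) : fml2 V Val :=
  fun n1 n2 => a n1 n2 /\ b n1 n2.
Definition f2_or {V Val} (a b : fml2 V Val) : fml2 V Val :=
  fun n1 n2 => a n1 n2 \/ b n1 n2.
Definition lift {V Val} (a : fml V Val) : fml2 V Val := fun n1 _ => a n1.

Definition finite_type (V : Type) : Prop := exists l : list V, forall x : V, In x l.

Definition GAL {V Val : Type} (base : fml V Val) (stay step : fml2 V Val)
  (conc : fml V Val) : Prop :=
  (forall alpha : nat -> assignment V Val,
      conc (alpha 0) ->
      (forall i, step (alpha i) (alpha (S i)) \/ stay (alpha i) (alpha (S i))) ->
      (forall i, exists j, i <= j /\ step (alpha j) (alpha (S j))) ->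
      exists k, base (alpha k))
  /\
  (forall nu nu' : assignment V Val,
      conc nu -> (step nu nu' \/ stay nu nu') -> conc nu').

(* Main.v *)
Require Import Defs.
From Stdlib Require Import List Arith Lia Classical.

Theorem lemma2 (V Val : Type) (HV : finite_type V)
  (base0 conc0 base1 conc1 : fml V Val)
  (stay0 step0 stay1 step1 : fml2 V Val) :
  GAL base0 stay0 step0 conc0 ->
  GAL base1 stay1 step1 conc1 ->
  GAL (f_or base0 base1) (f2_and stay0 stay1)
      (f2_or (f2_and (lift conc0) step0)
             (f2_and (f2_and (lift conc1) step1) stay0))
      (f_or conc0 conc1).
Proof.
  intros [I0 C0] [I1 C1].
  unfold GAL, f_or, f2_or, f2_and, lift. split.
  - intros alpha _ Htr Hinf.
    destruct (classic (forall i, exists j, i <= j /\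
       (conc0 (alpha j) /\ step0 (alpha j) (alpha (S j))))) as [H|H].
    + destruct (H 0) as [j0 [_ [Hc _]]].
      destruct (I0 (fun i => alpha (j0 + i))) as [k Hk].
      * rewrite Nat.add_0_r; exact Hc.
      * intro i. rewrite <- plus_n_Sm.
        destruct (Htr (j0 + i)) as [[[_ ?]|[[_ _] ?]]|[? _]]; tauto.
      * intro i. destruct (H (j0 + i)) as [j [Hj [_ Hs]]].
        exists (j - j0). split; [lia|].
        replace (j0 + (j - j0)) with j by lia.
        rewrite <- plus_n_Sm. replace (j0 + (j - j0)) with j by lia. exact Hs.
      * exists (j0 + k); left; exact Hk.
    + apply not_all_ex_not in H. destruct H as [n Hn].
      assert (Hno : forall j, n <= j ->
        ~ (conc0 (alpha j) /\ step0 (alpha j) (alpha (S j)))).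
      { intros j Hj Hc. apply Hn. exists j; auto. }
      assert (Hst : forall i, exists j, i <= j /\ n <= j /\
         conc1 (alpha j) /\ step1 (alpha j) (alpha (S j))).
      { intro i. destruct (Hinf (i + n)) as [j [Hj Hs]].
        exists j. destruct Hs as [Hs|[[Hc Hs] _]].
        - exfalso. apply (Hno j); [lia|exact Hs].
        - repeat split; auto; lia. }
      destruct (Hst 0) as [j1 [_ [Hj1 [Hc _]]]].
      destruct (I1 (fun i => alpha (j1 + i))) as [k Hk].
      * rewrite Nat.add_0_r; exact Hc.
      * intro i. rewrite <- plus_n_Sm.
        destruct (Htr (j1 + i)) as [[Hs|[[_ ?] _]]|[_ ?]]; try tauto.
        exfalso. apply (Hno (j1 + i)); [lia|exact Hs].
      * intro i. destruct (Hst (j1 + i)) as [j [Hj [_ [_ Hs]]]].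
        exists (j - j1). split; [lia|].
        rewrite <- plus_n_Sm. replace (j1 + (j - j1)) with j by lia. exact Hs.
      * exists (j1 + k); right; exact Hk.
  - intros nu nu' Hc Ht.
    assert (K0 : conc0 nu -> conc0 nu').
    { intro H0. apply (C0 nu nu' H0).
      destruct Ht as [[[_ ?]|[_ ?]]|[? _]]; tauto. }
    destruct Hc as [H0|H1].
    + left; auto.
    + destruct Ht as [[[H0 _]|[[_ ?] _]]|[_ ?]].
      * left; auto.
      * right; apply (C1 nu nu' H1); tauto.
      * right; apply (C1 nu nu' H1); tauto.
Qed.
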